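(* Fix a positive integer $k$. Consider either of the following two cases. (Squared case) Fix $m$ tuples $(\beta_i,\gamma_i,\delta_i)$ of positive reals and let $B_i=1+\beta_i+\frac1{\gamma_i}$, $C_i=1+\gamma_i+\frac1{\delta_i}$, $D_i=1+\delta_i+\frac1{\beta_i}$ ($1\le i\le m$). Let $P_{\mathrm{low}}$ be the linear program: maximize $\sum_{j=1}^k\alpha_j$ subject to $f+\sum_{j=1}^k d_j\le1$; $\alpha_j\le\alpha_{j+1}$ ($1\le j<k$); $\alpha_j\le B_i\alpha_l+C_id_j+D_id_l$ ($1\le j,l\le k$, $1\le i\le m$); $x_{jl}\ge\alpha_j-d_l$ ($1\le j\le l\le k$); $\sum_{l=j}^k x_{jl}\le f$ ($1\le j\le k$); $\alpha_j,d_j,f,x_{jl}\ge0$. (Metric case) Let $P_{\mathrm{low}}$ be the same program with the constraints $\alpha_j\le B_i\alpha_l+C_id_j+D_id_l$ replaced by $\alpha_j\le\alpha_l+d_j+d_l$ ($1\le j,l\le k$). In either case let $P_{\mathrm{up}}$ be the program obtained from $P_{\mathrm{low}}$ by imposing $x_{jl}\ge\alpha_j-d_l$ only for $1\le j<l\le k$ (the variables $x_{jj}$ remain in $\sum_{l=j}^kx_{jl}\le f$ and are only required to be non-negative). Let $z_k$ be the optimal value of $P_{\mathrm{low}}$, and let $(\boldsymbol\alpha,\mathbf d,\mathbf x,f)$ be an optimal solution of $P_{\mathrm{up}}$, with value $x_k$. If $\varepsilon=\max_j\{\alpha_j-d_j\}$, then $z_k\ge\frac{1}{1+\varepsilon}x_k$.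 *)

(* Defs.v *)
From mathcomp Require Import all_boot all_order all_algebra.
Set Implicit Arguments. Unset Strict Implicit. Unset Printing Implicit Defensive.
Import Order.TTheory GRing.Theory Num.Theory.
Local Open Scope ring_scope.

(* Indices 1..k of the paper are represented by 'I_k (0-based). *)

Inductive lp_case (R : realFieldType) : Type :=
  | Metric
  | Squared (m : nat) (beta gamma delta : 'I_m -> R).

Arguments Metric {R}.

Definition case_ok (R : realFieldType) (c : lp_case R) : Prop :=
  match c with
  | Metric => True
  | Squared m be ga de => forall i : 'I_m, 0 < be i /\ 0 < ga i /\ 0 < de i
  end.

Definition tri_constr (R : realFieldType) (k : nat) (c : lp_case R)
    (alpha d : 'I_k -> R) : Prop :=
  match c with
  | Metric => forall j l : 'I_k, alpha j <= alpha l + d j + d l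
  | Squared m be ga de =>
      forall (j l : 'I_k) (i : 'I_m),
        let B := 1 + be i + (ga i)^-1 in
        let C := 1 + ga i + (de i)^-1 in
        let D := 1 + de i + (be i)^-1 in
        alpha j <= B * alpha l + C * d j + D * d l
  end.

(* Feasibility for P_low (up = false) and P_up (up = true).  In P_low the
   constraint x_{jl} >= alpha_j - d_l is imposed for j <= l, in P_up only for
   j < l. *)
Definition lp_feasible (R : realFieldType) (k : nat) (c : lp_case R) (up : bool)
    (alpha d : 'I_k -> R) (x : 'I_k -> 'I_k -> R) (f : R) : Prop :=
  [/\ f + \sum_(j < k) d j <= 1,
      (forall j l : 'I_k, val l = (val j).+1 -> alpha j <= alpha l) /\
      tri_constr c alpha d,
      (forall j l : 'I_k, (if up then (j < l)%N else (j <= l)%N) ->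
                          alpha j - d l <= x j l),
      (forall j : 'I_k, \sum_(l < k | (j <= l)%N) x j l <= f) &
      [/\ (forall j, 0 <= alpha j), (forall j, 0 <= d j), 0 <= f &
          (forall j l, 0 <= x j l)]].

Definition lp_obj (R : realFieldType) (k : nat) (alpha : 'I_k -> R) : R :=
  \sum_(j < k) alpha j.

Definition lp_opt_value (R : realFieldType) (k : nat) (c : lp_case R)
    (up : bool) (z : R) : Prop :=
  (exists (alpha d : 'I_k -> R) x f, lp_feasible c up alpha d x f /\ lp_obj alpha = z) /\
  (forall (alpha d : 'I_k -> R) x f, lp_feasible c up alpha d x f -> lp_obj alpha <= z).

Definition lp_opt_solution (R : realFieldType) (k : nat) (c : lp_case R)
    (up : bool) (alpha d : 'I_k -> R) (x : 'I_k -> 'I_k -> R) (f : R) : Prop :=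
  lp_feasible c up alpha d x f /\
  (forall (alpha' d' : 'I_k -> R) x' f', lp_feasible c up alpha' d' x' f' ->
     lp_obj alpha' <= lp_obj alpha).

(* Main.v *)
Require Import Defs.
From mathcomp Require Import all_boot all_order all_algebra.
From mathcomp Require Import lra zify.
Import Order.TTheory GRing.Theory Num.Theory.
Local Open Scope ring_scope.

Lemma tri_scale (R : realFieldType) (k : nat) (c : lp_case R) (alpha d : 'I_k -> R) (s : R) :
  0 <= s -> tri_constr c alpha d ->
  tri_constr c (fun j => alpha j * s) (fun j => d j * s).
Proof.
move=> s0; case: c => [|m be ga de] /= H.
  move=> j l; have := ler_wpM2r s0 (H j l).
  by rewrite !mulrDl.
move=> j l i /=; have := ler_wpM2r s0 (H j l i).
by rewrite /= !mulrDl !mulrA.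
Qed.

Lemma tri_raise (R : realFieldType) (k : nat) (c : lp_case R) (alpha alpha2 d : 'I_k -> R) :
  case_ok c -> (forall j, 0 <= alpha2 j) -> (forall j, 0 <= d j) ->
  (forall j, alpha j <= alpha2 j) -> (forall j, alpha2 j = alpha j \/ alpha2 j = d j) ->
  tri_constr c alpha d -> tri_constr c alpha2 d.
Proof.
case: c => [|m be ga de] /= hc a0 d0 le eq H.
  move=> j l; case: (eq j) => ->.
    by apply: (le_trans (H j l)); rewrite lerD2r lerD2r le.
  have := a0 l; have := d0 l; have := d0 j; lra.
move=> j l i /=; have [hb [hg hd]] := hc i.
have hB : 0 < 1 + be i + (ga i)^-1 by rewrite addr_gt0 ?invr_gt0 // addr_gt0.
have hD : 0 < 1 + de i + (be i)^-1 by rewrite addr_gt0 ?invr_gt0 // addr_gt0.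
have hC : 1 <= 1 + ga i + (de i)^-1.
  by rewrite -addrA lerDl addr_ge0 // ?invr_ge0 ltW.
case: (eq j) => ->.
  apply: (le_trans (H j l i)); rewrite /= lerD2r lerD2r.
  by rewrite ler_pM2l.
have h1 : 0 <= (1 + be i + (ga i)^-1) * alpha2 l by exact: (mulr_ge0 (ltW hB) (a0 l)).
have h2 : 0 <= (1 + de i + (be i)^-1) * d l by exact: (mulr_ge0 (ltW hD) (d0 l)).
have h3 : d j <= (1 + ga i + (de i)^-1) * d j by rewrite ler_peMl.
lra.
Qed.

Theorem lemma9 (R : realFieldType) (k : nat) (hk : (0 < k)%N)
    (c : lp_case R) (hc : case_ok c)
    (zk : R) (hz : lp_opt_value k c false zk)
    (alpha d : 'I_k -> R) (x : 'I_k -> 'I_k -> R) (f : R)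
    (hopt : lp_opt_solution c true alpha d x f)
    (xk : R) (hxk : xk = lp_obj alpha)
    (eps : R)
    (heps : (exists j : 'I_k, eps = alpha j - d j) /\
            (forall j : 'I_k, alpha j - d j <= eps)) :
  xk / (1 + eps) <= zk.
Proof.
case: hopt => hfeas hmax.
case: (hfeas) => hsum [hmon htri] hx hxs [a0 d0 f0 x0].
have hlast : (k.-1 < k)%N by rewrite prednK.
set last := Ordinal hlast.
have eps0 : 0 <= eps.
  apply: le_trans (heps.2 last); rewrite subr_ge0.
  rewrite leNgt; apply/negP => hlt.
  pose alpha2 j := if j == last then d last else alpha j.
  have le2 : forall j, alpha j <= alpha2 j.
    by move=> j; rewrite /alpha2; case: eqP => [->|_]; [exact: ltW|].
  have a20 : forall j, 0 <= alpha2 j.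
    by move=> j; rewrite /alpha2; case: eqP => _; [exact: d0|exact: a0].
  have nl : forall j l : 'I_k, (j < l)%N -> alpha2 j = alpha j.
    move=> j l jl; rewrite /alpha2; case: eqP => // ej.
    exfalso; have := ltn_ord l; move: jl; rewrite ej /=; lia.
  have feas2 : lp_feasible c true alpha2 d x f.
    split => //.
    - split.
        move=> j l hjl; rewrite (nl j l) ?hjl //.
        apply: (le_trans (hmon j l hjl)); exact: le2.
      apply: tri_raise => // j; rewrite /alpha2; case: eqP => [->|_]; by [right|left].
    - by move=> j l hjl; rewrite (nl j l hjl); apply: hx.
  have := hmax _ _ _ _ feas2; rewrite /lp_obj [X in X <= _](bigD1 last) //=.
  rewrite [X in _ <= X](bigD1 last) //= {1}/alpha2 eqxx.
  rewrite (eq_bigr alpha); last by move=> i ni; rewrite /alpha2 (negbTE ni).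
  move: hlt; set S := \sum_(i < k | _) _; lra.
set s := (1 + eps)^-1.
have e1 : 0 < 1 + eps by lra.
have s0 : 0 < s by rewrite invr_gt0.
pose alpha' j := alpha j * s.
pose d' j := d j * s.
pose x' (j l : 'I_k) := (x j l + (if j == l then eps else 0)) * s.
pose f' := (f + eps) * s.
have feas : lp_feasible c false alpha' d' x' f'.
  split.
  - rewrite /f' /d' -mulr_suml -mulrDl.
    rewrite -(mulfV (lt0r_neq0 e1)) -/s ler_pM2r //; lra.
  - split; last exact: tri_scale (ltW s0) htri.
    by move=> j l hjl; rewrite /alpha' ler_pM2r ?hmon.
  - move=> j l /=; rewrite leq_eqVlt => /orP [/eqP/val_inj ->|hjl].
      rewrite /alpha' /d' /x' eqxx -mulrBl ler_pM2r //.
      have := heps.2 l; have := x0 l l; lra.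
    rewrite /alpha' /d' /x' -mulrBl ler_pM2r //.
    rewrite ifF; last by apply/eqP => e; rewrite e ltnn in hjl.
    by rewrite addr0 hx.
  - move=> j; rewrite /x' /f' -mulr_suml ler_pM2r // big_split /=.
    have -> : \sum_(l < k | (j <= l)%N) (if j == l then eps else 0) = eps.
      rewrite (bigD1 j) //= eqxx big1 ?addr0 // => i /andP [_ ni].
      by rewrite eq_sym (negbTE ni).
    have := hxs j; lra.
  - split => //.
    + by move=> j; apply: mulr_ge0 (a0 j) (ltW s0).
    + by move=> j; apply: mulr_ge0 (d0 j) (ltW s0).
    + by apply: mulr_ge0 (addr_ge0 f0 eps0) (ltW s0).
    + move=> j l; apply: mulr_ge0 _ (ltW s0); apply: addr_ge0 (x0 j l) _.
      by case: eqP.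
have := hz.2 _ _ _ _ feas.
by rewrite hxk /lp_obj /alpha' -mulr_suml.
Qed.
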